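(* Let $\mathcal A\subseteq\mathcal B(H)$ be a von Neumann algebra, $\xi\in H$, and let $\epsilon_A\in\mathcal A$ be the support projection of $\omega_\xi|_{\mathcal A}$. Suppose that for every self-adjoint $a\in\mathcal A$ and every $\epsilon>0$ there exists $\hat a\in\mathcal A'$ with $\|a\xi-\hat a\xi\|<\epsilon$. Then $\epsilon_A a=a\epsilon_A$ for every $a\in\mathcal A$, i.e. $\epsilon_A$ is central in $\mathcal A$.
   Context: $\omega_\xi(x)=\langle x\xi,\xi\rangle$. The support of a normal positive functional $\omega$ on a von Neumann algebra $\mathcal M$ is the smallest projection $p\in\mathcal M$ with $\omega(x)=\omega(pxp)$ for all $x\in\mathcal M$. *)

(* Defs.v *)
From HB Require Import structures.
From mathcomp Require Import all_boot all_order all_algebra.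
From mathcomp Require Import reals.
From mathcomp Require Import complex.
Set Implicit Arguments. Unset Strict Implicit. Unset Printing Implicit Defensive.
Import Order.TTheory GRing.Theory Num.Theory.
Local Open Scope ring_scope.

Section Hilbert.
Variable R : realType.
Local Notation C := R[i].
Variable V : lmodType C.
Variable ip : V -> V -> C.   (* inner product, linear in the 1st argument *)

Definition hnorm (x : V) : R := Num.sqrt (complex.Re (ip x x)).

Definition is_hilbert : Prop :=
  [/\ (forall (a : C) (x y z : V), ip (a *: x + y) z = a * ip x z + ip y z),
      (forall x y : V, ip y x = Num.conj (ip x y)),
      (forall x : V, 0 <= ip x x),
      (forall x : V, ip x x = 0 -> x = 0) &
      (forall u : nat -> V,
         (forall e : R, 0 < e -> exists N : nat, forall m n : nat,
              (N <= m)%N -> (N <= n)%N -> hnorm (u m - u n) < e) ->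
         exists l : V, forall e : R, 0 < e -> exists N : nat, forall n : nat,
              (N <= n)%N -> hnorm (u n - l) < e)].

Definition bounded_op (T : V -> V) : Prop :=
  (forall (a : C) (x y : V), T (a *: x + y) = a *: T x + T y) /\
  exists M : R, forall x : V, hnorm (T x) <= M * hnorm x.

Definition is_adjoint (T S : V -> V) : Prop :=
  forall x y : V, ip (T x) y = ip x (S y).

Definition self_adjoint (T : V -> V) : Prop := is_adjoint T T.

Definition is_projection (P : V -> V) : Prop :=
  bounded_op P /\ P \o P =1 P /\ self_adjoint P.

Definition proj_le (P Q : V -> V) : Prop := forall x, Q (P x) = P x.

Definition commutant (A : (V -> V) -> Prop) : (V -> V) -> Prop :=
  fun T => bounded_op T /\ forall a, A a -> forall x, T (a x) = a (T x).

Definition von_neumann_algebra (A : (V -> V) -> Prop) : Prop :=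
  (forall a, A a -> bounded_op a) /\
  (forall a, A a -> exists b, A b /\ is_adjoint a b) /\
  (forall T, A T <-> commutant (commutant A) T).

Definition omega (xi : V) (T : V -> V) : C := ip (T xi) xi.

Definition is_support (A : (V -> V) -> Prop) (xi : V) (P : V -> V) : Prop :=
  [/\ A P, is_projection P,
      (forall x, A x -> omega xi x = omega xi (P \o x \o P)) &
      (forall Q, A Q -> is_projection Q ->
         (forall x, A x -> omega xi x = omega xi (Q \o x \o Q)) -> proj_le P Q)].
End Hilbert.

(* Main.v *)
Require Import Defs.
From HB Require Import structures.
From mathcomp Require Import all_boot all_order all_algebra.
From mathcomp Require Import reals.
From mathcomp Require Import complex.
From mathcomp Require Import ring lra.
From Stdlib Require Import ClassicalEpsilon FunctionalExtensionality.
Import Order.TTheory GRing.Theory Num.Theory.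
Local Open Scope ring_scope.
Local Open Scope complex_scope.
Local Open Scope ring_scope.

Section Dev.
Variable R : realType.
Local Notation C := R[i].
Variable V : lmodType C.
Variable ip : V -> V -> C.
Hypothesis HH : is_hilbert ip.

Lemma ipDZl a x y z : ip (a *: x + y) z = a * ip x z + ip y z.
Proof. by move: HH => [h _ _ _ _]; apply: h. Qed.
Lemma ipC x y : ip y x = (ip x y)^*.
Proof. by move: HH => [_ h _ _ _]; apply: h. Qed.
Lemma ipxx_ge0 x : 0 <= ip x x.
Proof. by move: HH => [_ _ h _ _]; apply: h. Qed.
Lemma ipxx_eq0 x : ip x x = 0 -> x = 0.
Proof. by move: HH => [_ _ _ h _]; apply: h. Qed.

Lemma ipDl x y z : ip (x + y) z = ip x z + ip y z.
Proof. by rewrite -[x]scale1r ipDZl mul1r scale1r. Qed.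
Lemma ip0l z : ip 0 z = 0.
Proof.
have := ipDl 0 0 z; rewrite addr0 => /(congr1 (fun t => t - ip 0 z)).
by rewrite subrr addrK.
Qed.
Lemma ipZl a x z : ip (a *: x) z = a * ip x z.
Proof. by rewrite -[a *: x]addr0 ipDZl ip0l addr0. Qed.
Lemma ipNl x z : ip (- x) z = - ip x z.
Proof. by rewrite -scaleN1r ipZl mulN1r. Qed.
Lemma ipBl x y z : ip (x - y) z = ip x z - ip y z.
Proof. by rewrite ipDl ipNl. Qed.
Lemma cjD (a b : C) : (a + b)^* = a^* + b^*.
Proof. exact: rmorphD. Qed.
Lemma cjM (a b : C) : (a * b)^* = a^* * b^*.
Proof. exact: rmorphM. Qed.
Lemma cjN (a : C) : (- a)^* = - a^*.
Proof. exact: rmorphN. Qed.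

Lemma cj_real (k : R) : (k%:C)^* = k%:C.
Proof. exact: conjc_real. Qed.

Lemma ipDr x y z : ip z (x + y) = ip z x + ip z y.
Proof. by rewrite ipC ipDl cjD -!ipC. Qed.
Lemma ipZr a x z : ip z (a *: x) = a^* * ip z x.
Proof. by rewrite ipC ipZl cjM -ipC. Qed.
Lemma ip0r z : ip z 0 = 0.
Proof. by rewrite ipC ip0l conjC0. Qed.
Lemma ipNr x z : ip z (- x) = - ip z x.
Proof. by rewrite -scaleN1r ipZr conjCN1 mulN1r. Qed.
Lemma ipBr x y z : ip z (x - y) = ip z x - ip z y.
Proof. by rewrite ipDr ipNr. Qed.

Definition nsq (x : V) : R := complex.Re (ip x x).

Lemma ipE x : ip x x = (nsq x)%:C.
Proof. by rewrite /nsq RRe_real // ger0_real // ipxx_ge0. Qed.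
Lemma nsq_ge0 x : 0 <= nsq x.
Proof. by rewrite -ler0c -ipE ipxx_ge0. Qed.
Lemma nsq_eq0 x : nsq x = 0 -> x = 0.
Proof. by move=> h; apply: ipxx_eq0; rewrite ipE h. Qed.
Lemma nsq0 : nsq 0 = 0.
Proof. by rewrite /nsq ip0l. Qed.

Lemma ReD (a b : C) : complex.Re (a + b) = complex.Re a + complex.Re b.
Proof. by case: a; case: b. Qed.
Lemma ReN (a : C) : complex.Re (- a) = - complex.Re a.
Proof. by case: a. Qed.
Lemma Re_conj (a : C) : complex.Re (a^*) = complex.Re a.
Proof. by case: a. Qed.
Lemma Re_real (k : R) : complex.Re (k%:C) = k.
Proof. by []. Qed.
Lemma ReMr (k : R) (a : C) : complex.Re (k%:C * a) = k * complex.Re a.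
Proof. by case: a => u v /=; rewrite mul0r subr0. Qed.

Lemma nsqD x y : nsq (x + y) = nsq x + nsq y + 2 * complex.Re (ip x y).
Proof.
rewrite /nsq ipDl !ipDr !ReD [ip y x]ipC Re_conj; lra.
Qed.
Lemma nsqN x : nsq (- x) = nsq x.
Proof. by rewrite /nsq ipNl ipNr opprK. Qed.
Lemma nsqZ (k : R) x : nsq (k%:C *: x) = k ^+ 2 * nsq x.
Proof.
by rewrite /nsq ipZl ipZr mulrA cj_real -rmorphM ipE -rmorphM Re_real /= expr2.
Qed.

Lemma nsqB x y : nsq (x - y) = nsq x + nsq y - 2 * complex.Re (ip x y).
Proof. by rewrite nsqD nsqN ipNr ReN mulrN. Qed.

Lemma ReipZr (s : R) x y : complex.Re (ip x (s%:C *: y)) = s * complex.Re (ip x y).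
Proof. by rewrite ipZr cj_real ReMr. Qed.
Lemma ReipZl (s : R) x y : complex.Re (ip (s%:C *: x) y) = s * complex.Re (ip x y).
Proof. by rewrite ipZl ReMr. Qed.

Lemma young0 (t : R) a b :
  2 * t * complex.Re (ip a b) <= t ^+ 2 * nsq a + nsq b.
Proof.
have := nsq_ge0 (t%:C *: a - b); rewrite nsqB nsqZ ReipZl; lra.
Qed.

Lemma young (t : R) a b : 0 < t ->
  2 * complex.Re (ip a b) <= t * nsq a + nsq b / t.
Proof.
move=> t0; rewrite -(ler_pM2r t0).
have -> : (t * nsq a + nsq b / t) * t = t ^+ 2 * nsq a + nsq b.
  by field; rewrite gt_eqF.
have := young0 t a b; lra.
Qed.

Lemma nsqD_le a b : nsq (a + b) <= 2 * nsq a + 2 * nsq b.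
Proof. have := young0 1 a b; rewrite nsqD; lra. Qed.

Lemma Re_cs a b : complex.Re (ip a b) ^+ 2 <= nsq a * nsq b.
Proof.
have [A0|A0] := eqVneq (nsq a) 0.
  by rewrite (nsq_eq0 _ A0) ip0l /= expr2 mul0r nsq0 mul0r.
have Ap : 0 < nsq a by rewrite lt_def A0 nsq_ge0.
set r := complex.Re (ip a b); set A := nsq a; set B := nsq b.
set s := r / A.
have hr : r = s * A by rewrite /s divfK.
have := young0 s a b; rewrite -/r -/A -/B hr => h.
have hB : 0 <= B by exact: nsq_ge0.
nra.
Qed.

Lemma Re_ipi w m : complex.Re (ip w ('i *: m)) = complex.Im (ip w m).
Proof. rewrite ipZr; case: (ip w m) => u v /=; lra. Qed.

Lemma C_eq0 (g : C) : complex.Re g = 0 -> complex.Im g = 0 -> g = 0.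
Proof. by case: g => u v /= -> ->. Qed.

Lemma hnormE v : hnorm ip v = Num.sqrt (nsq v).
Proof. by []. Qed.

Lemma hnorm_lt v (e : R) : 0 < e -> nsq v < e ^+ 2 -> hnorm ip v < e.
Proof.
move=> e0 h; rewrite hnormE; rewrite -(ltr_sqrt _ (exprn_gt0 2 e0)) in h.
by rewrite sqrtr_sqr gtr0_norm in h.
Qed.

Lemma hnorm_lt' v (e : R) : 0 < e -> hnorm ip v < e -> nsq v < e ^+ 2.
Proof.
move=> e0; rewrite hnormE -(ltr_sqrt _ (exprn_gt0 2 e0)) sqrtr_sqr gtr0_norm //.
Qed.

Lemma small_inv (e : R) : 0 < e ->
  exists K : nat, forall m, (K <= m)%N -> (m.+1%:R)^-1 < e.
Proof.
move=> e0; exists (Num.Def.archi_bound (e^-1)) => m hm.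
have ei : 0 <= e^-1 by rewrite invr_ge0 ltW.
have h1 := archi_boundP ei.
have h2 : (Num.Def.archi_bound e^-1)%:R <= m.+1%:R :> R.
  by rewrite ler_nat; apply: leq_trans hm _.
have h3 : e^-1 < m.+1%:R by apply: lt_le_trans h1 h2.
have mp : 0 < m.+1%:R :> R by rewrite ltr0n.
rewrite -(ltr_pM2r mp) mulVf ?gt_eqF //.
by rewrite -(ltr_pM2l e0) mulfV ?gt_eqF // in h3.
Qed.

Lemma complete (u : nat -> V) :
  (forall e : R, 0 < e -> exists N : nat, forall m n : nat,
     (N <= m)%N -> (N <= n)%N -> hnorm ip (u m - u n) < e) ->
  exists l : V, forall e : R, 0 < e -> exists N : nat, forall n : nat,
     (N <= n)%N -> hnorm ip (u n - l) < e.
Proof. by move: HH => [_ _ _ _ h]; apply: h. Qed.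

Definition subsp (N : V -> Prop) :=
  [/\ N 0, (forall x y, N x -> N y -> N (x + y)),
      (forall (a : C) x, N x -> N (a *: x)) &
      (forall x, (forall e : R, 0 < e -> exists n, N n /\ nsq (x - n) < e) -> N x)].

Lemma Re_orth N x m : subsp N -> N m ->
  (forall n, N n -> nsq (x - m) <= nsq (x - n)) ->
  forall n, N n -> complex.Re (ip (x - m) n) = 0.
Proof.
move=> [N0 ND NZ Ncl] Nm hmin n Nn.
set w := x - m; set r := complex.Re (ip w n); set M := nsq n.
have key : forall s : R, 0 <= s ^+ 2 * M - 2 * s * r.
  move=> s.
  have hN : N (m + s%:C *: n) by apply: ND => //; apply: NZ.
  have := hmin _ hN.
  have -> : x - (m + s%:C *: n) = w - s%:C *: n by rewrite opprD addrA.
  rewrite [nsq (w - _)]nsqB nsqZ ReipZr -/r -/M; lra.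
have M0 : 0 <= M by exact: nsq_ge0.
set s := r / (M + 1).
have hr : r = s * (M + 1) by rewrite /s divfK // gt_eqF // ltr_wpDl.
have h := key s.
have s0 : s = 0 by nra.
by rewrite hr s0 mul0r.
Qed.

Lemma proj_exists N : subsp N -> forall x, exists m, N m /\
   forall n, N n -> ip (x - m) n = 0.
Proof.
move=> hN; have [N0 ND NZ Ncl] := hN; move=> x.
pose S := fun r : R => exists n, N n /\ r = nsq (x - n).
have Sne : classical_sets.nonempty S by exists (nsq (x - 0)), 0.
have Slb : classical_sets.has_lbound S.
  by exists 0 => r [n [_ ->]]; exact: nsq_ge0.
set d := inf S.
have d0 : 0 <= d by apply: lb_le_inf => // r [n [_ ->]]; exact: nsq_ge0.
have dle : forall n, N n -> d <= nsq (x - n).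
  by move=> n Nn; apply: ge_inf => //; exists n.
have hseq : forall k : nat, exists n, N n /\ nsq (x - n) < d + (k.+1%:R)^-1.
  move=> k; have : inf S < d + (k.+1%:R)^-1 by rewrite ltrDl invr_gt0 ltr0n.
  by move=> /(inf_lt Sne) [r [n [Nn ->]] h]; exists n.
pose u := fun k => proj1_sig (constructive_indefinite_description _ (hseq k)).
have hu : forall k, N (u k) /\ nsq (x - u k) < d + (k.+1%:R)^-1.
  by move=> k; exact: (proj2_sig (constructive_indefinite_description _ (hseq k))).
have cauchy : forall m n, nsq (u m - u n) <= 2 * (m.+1%:R)^-1 + 2 * (n.+1%:R)^-1.
  move=> m n; have [Nm hm] := hu m; have [Nn hn] := hu n.
  set a := x - u m; set b := x - u n.
  have Nmid : N ((2^-1 : R)%:C *: (u m + u n)) by apply: NZ; apply: ND.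
  have hmid := dle _ Nmid.
  have e1 : a + b = (2 : R)%:C *: (x - (2^-1 : R)%:C *: (u m + u n)).
    rewrite scalerBr scalerA -rmorphM mulfV ?pnatr_eq0 // rmorph1 scale1r.
    rewrite rmorph_nat scaler_nat mulr2n /a /b.
    by rewrite opprD !addrA; congr (_ - _); rewrite addrAC.
  have e2 : a - b = u n - u m by rewrite /a /b opprB addrC addrA subrK.
  have par : nsq (a + b) + nsq (a - b) = 2 * nsq a + 2 * nsq b.
    rewrite nsqD nsqB; lra.
  have : 4 * d <= nsq (a + b) by rewrite e1 nsqZ; lra.
  rewrite -[nsq (u m - u n)]nsqN opprB -e2.
  have hm' : nsq a <= d + (m.+1%:R)^-1 by exact: ltW.
  have hn' : nsq b <= d + (n.+1%:R)^-1 by exact: ltW.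
  move=> h4; set im := (m.+1%:R)^-1 in hm' *; set iN := (n.+1%:R)^-1 in hn' *.
  lra.
have [l hl] : exists l : V, forall e : R, 0 < e -> exists K : nat, forall n : nat,
     (K <= n)%N -> hnorm ip (u n - l) < e.
  apply: complete => e e0.
  have e40 : 0 < e ^+ 2 / 4 by rewrite divr_gt0 // exprn_gt0.
  have [K hK] := small_inv _ e40.
  exists K => m n hm hn; apply: hnorm_lt => //.
  apply: le_lt_trans (cauchy m n) _.
  have h1 := hK _ hm; have h2 := hK _ hn.
  set im := (m.+1%:R)^-1 in h1 *; set iN := (n.+1%:R)^-1 in h2 *; lra.
have Nl : N l.
  apply: Ncl => e e0.
  have se : 0 < Num.sqrt e by rewrite sqrtr_gt0.
  have [K hK] := hl _ se.
  exists (u K); split; first by case: (hu K).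
  rewrite -nsqN opprB.
  have := hnorm_lt' _ _ se (hK K (leqnn K)).
  by rewrite sqr_sqrtr // ltW.
have hle : nsq (x - l) <= d.
  apply/ler_addgt0Pr => e e0.
  have D0 : 0 < d + 1 by lra.
  set t := e / (3 * (d + 1)).
  have t0 : 0 < t by rewrite /t divr_gt0 // mulr_gt0.
  have tD : t * (d + 1) = e / 3 by rewrite /t; field; rewrite gt_eqF.
  have e6 : 0 < e / 6 by rewrite divr_gt0.
  have te6 : 0 < t * e / 6 by rewrite divr_gt0 // mulr_gt0.
  have [K1 hK1] := small_inv _ e6.
  have s1 : 0 < Num.sqrt (e / 6) by rewrite sqrtr_gt0.
  have s2 : 0 < Num.sqrt (t * e / 6) by rewrite sqrtr_gt0.
  have [K2 hK2] := hl _ s1.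
  have [K3 hK3] := hl _ s2.
  pose n := maxn K1 (maxn K2 K3).
  have n1 : (K1 <= n)%N by rewrite leq_maxl.
  have n2 : (K2 <= n)%N by rewrite /n (leq_trans (leq_maxl K2 K3)) // leq_maxr.
  have n3 : (K3 <= n)%N by rewrite /n (leq_trans (leq_maxr K2 K3)) // leq_maxr.
  have [_ hA] := hu n.
  have i1 := hK1 _ n1.
  have i0 : (n.+1%:R)^-1 <= 1 :> R by rewrite invf_le1 // ?ler1n ?ltr0n.
  have v1 := hnorm_lt' _ _ s1 (hK2 _ n2).
  have v2 := hnorm_lt' _ _ s2 (hK3 _ n3).
  rewrite sqr_sqrtr in v1; last by rewrite ltW.
  rewrite sqr_sqrtr in v2; last by rewrite ltW.
  have -> : x - l = (x - u n) + (u n - l) by rewrite addrA subrK.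
  rewrite nsqD.
  have hy := young t (x - u n) (u n - l) t0.
  set A := nsq (x - u n) in hA hy *.
  set W := nsq (u n - l) in v1 v2 hy *.
  set r := complex.Re _ in hy *.
  set iv := (n.+1%:R)^-1 in hA i1 i0.
  have A1 : A <= d + 1 by lra.
  have tA : t * A <= e / 3 by rewrite -tD ler_pM2l.
  have Wt : W / t < e / 6.
    by rewrite ltr_pdivrMr // [e / 6 * t]mulrC mulrA.
  lra.
have hmin : forall n, N n -> nsq (x - l) <= nsq (x - n).
  by move=> n Nn; apply: le_trans hle (dle n Nn).
exists l; split => // n Nn; apply: C_eq0.
  exact: (Re_orth N x l hN Nl hmin n Nn).
rewrite -Re_ipi; apply: (Re_orth N x l hN Nl hmin).
exact: NZ.
Qed.

Section Ops.
Variable T : V -> V.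
Hypothesis hT : bounded_op ip T.

Lemma linT a x y : T (a *: x + y) = a *: T x + T y.
Proof. by move: hT => [h _]; apply: h. Qed.
Lemma linT0 : T 0 = 0.
Proof.
have h := linT 1 0 0; rewrite !scale1r addr0 in h.
by apply: (@addrI _ (T 0)); rewrite addr0 -h.
Qed.
Lemma linTD x y : T (x + y) = T x + T y.
Proof. by rewrite -[x]scale1r linT !scale1r. Qed.
Lemma linTZ a x : T (a *: x) = a *: T x.
Proof. by rewrite -[a *: x]addr0 linT linT0 addr0. Qed.
Lemma linTN x : T (- x) = - T x.
Proof. by rewrite -scaleN1r linTZ scaleN1r. Qed.
Lemma linTB x y : T (x - y) = T x - T y.
Proof. by rewrite linTD linTN. Qed.

Lemma bnd_nsq : exists K : R, 0 <= K /\ forall v, nsq (T v) <= K * nsq v.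
Proof.
move: hT => [_ [M hM]]; exists (`|M| ^+ 2); split; first exact: exprn_ge0.
move=> v; have h1 := hM v.
have h2 : M * hnorm ip v <= `|M| * hnorm ip v.
  by rewrite ler_wpM2r ?ler_norm // sqrtr_ge0.
have h0 : 0 <= hnorm ip (T v) by exact: sqrtr_ge0.
have h3 : hnorm ip (T v) ^+ 2 <= (`|M| * hnorm ip v) ^+ 2.
  rewrite ler_pXn2r // ?nnegrE //; first by apply: le_trans h1 h2.
  by apply: le_trans h0 (le_trans h1 h2).
by rewrite !hnormE exprMn !sqr_sqrtr ?nsq_ge0 in h3.
Qed.
End Ops.

Lemma bnd_of_nsq (T : V -> V) (K : R) :
  (forall a x y, T (a *: x + y) = a *: T x + T y) -> 0 <= K ->
  (forall v, nsq (T v) <= K * nsq v) -> bounded_op ip T.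
Proof.
move=> hl K0 hK; split => //; exists (Num.sqrt K) => v.
by rewrite !hnormE -sqrtrM // ler_sqrt ?mulr_ge0 ?nsq_ge0.
Qed.

Definition nC (c : C) : R := complex.Re (c * c^*).
Lemma nC_ge0 c : 0 <= nC c.
Proof. by have := mul_conjC_ge0 c; rewrite lecE => /andP[_]. Qed.
Lemma nsqZC (c : C) x : nsq (c *: x) = nC c * nsq x.
Proof.
rewrite /nsq ipZl ipZr mulrA ipE -/(nsq x) /nC.
by case: (c * c^*) => u w /=; rewrite mulr0 subr0.
Qed.

Lemma cji : ('i%C : C)^* = - 'i%C.
Proof. by apply/eqP; rewrite eq_complex /= oppr0 !eqxx. Qed.
Lemma mii : (- 'i%C : C) * 'i%C = 1.
Proof. by rewrite mulNr -expr2 sqr_i opprK. Qed.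

Lemma swapZ (c e : C) (v : V) : c *: (e *: v) = e *: (c *: v).
Proof. by rewrite !scalerA mulrC. Qed.

Lemma bnd_comb (f g : V -> V) (c e : C) : bounded_op ip f -> bounded_op ip g ->
  bounded_op ip (fun x => c *: f x + e *: g x).
Proof.
move=> hf hg.
have [Kf [Kf0 hKf]] := bnd_nsq _ hf; have [Kg [Kg0 hKg]] := bnd_nsq _ hg.
apply: (@bnd_of_nsq _ (2 * nC c * Kf + 2 * nC e * Kg)).
- move=> al x y; rewrite (linT _ hf) (linT _ hg) !scalerDr !(swapZ c al) !(swapZ e al).
  by rewrite addrACA -scalerDr.
- by rewrite addr_ge0 // !mulr_ge0 // nC_ge0.
- move=> v; apply: le_trans (nsqD_le _ _) _; rewrite !nsqZC.
  have := hKf v; have := hKg v; have := nC_ge0 c; have := nC_ge0 e.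
  have := nsq_ge0 v; have := nsq_ge0 (f v); have := nsq_ge0 (g v).
  set A1 := nsq (f v); set A2 := nsq (g v); set B := nsq v.
  set c1 := nC c; set c2 := nC e; nra.
Qed.

Lemma bnd_comp (f g : V -> V) : bounded_op ip f -> bounded_op ip g ->
  bounded_op ip (fun x => f (g x)).
Proof.
move=> hf hg.
have [Kf [Kf0 hKf]] := bnd_nsq _ hf; have [Kg [Kg0 hKg]] := bnd_nsq _ hg.
apply: (@bnd_of_nsq _ (Kf * Kg)).
- by move=> al x y; rewrite (linT _ hg) (linT _ hf).
- exact: mulr_ge0.
- move=> v; apply: le_trans (hKf _) _; rewrite -mulrA ler_wpM2l //.
Qed.

Lemma bnd_id : bounded_op ip (fun x => x).
Proof. by apply: (@bnd_of_nsq _ 1) => // v; rewrite mul1r. Qed.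

Lemma bnd_ext (f g : V -> V) : bounded_op ip f -> f =1 g -> bounded_op ip g.
Proof. by move=> hf e; rewrite -(functional_extensionality _ _ e). Qed.

Lemma nsq_eq0' x : nsq x <= 0 -> x = 0.
Proof. by move=> h; apply: nsq_eq0; apply/eqP; rewrite eq_le h nsq_ge0. Qed.

Lemma ip_eq0_all x : (forall y, ip x y = 0) -> x = 0.
Proof. by move=> h; apply: ipxx_eq0; apply: h. Qed.

Section Main.
Variable A : (V -> V) -> Prop.
Hypothesis HA : von_neumann_algebra ip A.
Variable xi : V.
Variable p : V -> V.
Hypothesis Hsupp : is_support ip A xi p.
Hypothesis Happrox : forall a : V -> V, A a -> self_adjoint ip a ->
     forall e : R, 0 < e -> exists ah : V -> V,
       commutant ip A ah /\ hnorm ip (a xi - ah xi) < e.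

Lemma A_bnd a : A a -> bounded_op ip a.
Proof. by move: HA => [h _]; apply: h. Qed.
Lemma A_adj a : A a -> exists b, A b /\ is_adjoint ip a b.
Proof. by move: HA => [_ [h _]]; apply: h. Qed.
Lemma inA f : bounded_op ip f ->
  (forall T, commutant ip A T -> forall x, T (f x) = f (T x)) -> A f.
Proof.
move=> hf hc; move: HA => [_ [_ h]]; apply: (proj2 (h f)); split => // T hT x.
by rewrite hc.
Qed.
Lemma comm T a : commutant ip A T -> A a -> forall x, T (a x) = a (T x).
Proof. by move=> [_ h] Aa x; apply: h. Qed.
Lemma comm_bnd T : commutant ip A T -> bounded_op ip T.
Proof. by case. Qed.

Lemma inA_comb (f g : V -> V) (c e : C) : A f -> A g ->
  A (fun x => c *: f x + e *: g x).
Proof.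
move=> Af Ag; apply: inA; first exact: bnd_comb (A_bnd _ Af) (A_bnd _ Ag).
move=> T hT x; have hb := comm_bnd _ hT.
by rewrite (linTD _ hb) !(linTZ _ hb) (comm _ _ hT Af) (comm _ _ hT Ag).
Qed.

Lemma Ap : A p.
Proof. by move: Hsupp => [h _ _ _]. Qed.
Lemma pbnd : bounded_op ip p.
Proof. by move: Hsupp => [_ [h _] _ _]. Qed.
Lemma pp x : p (p x) = p x.
Proof. by move: Hsupp => [_ [_ [h _]] _ _]; exact: (h x). Qed.
Lemma psa x y : ip (p x) y = ip x (p y).
Proof. by move: Hsupp => [_ [_ [_ h]] _ _]; apply: h. Qed.
Lemma p_omega x : A x -> omega ip xi x = omega ip xi (p \o x \o p).
Proof. by move: Hsupp => [_ _ h _]; apply: h. Qed.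
Lemma p_min Q : A Q -> is_projection ip Q ->
  (forall x, A x -> omega ip xi x = omega ip xi (Q \o x \o Q)) -> proj_le p Q.
Proof. by move: Hsupp => [_ _ _ h]; apply: h. Qed.

Lemma p_orth v y : ip (v - p v) (p y) = 0.
Proof. by rewrite -psa (linTB _ pbnd) pp subrr ip0l. Qed.

Lemma p_pyth v : nsq v = nsq (p v) + nsq (v - p v).
Proof.
have -> : nsq v = nsq ((v - p v) + p v) by rewrite subrK.
by rewrite nsqD p_orth /= mulr0 addr0 addrC.
Qed.

Lemma A_id : A (fun x => x).
Proof. by apply: inA; [exact: bnd_id | by []]. Qed.

Lemma pxi : p xi = xi.
Proof.
have hid := p_omega _ A_id; rewrite /omega /= pp in hid.
apply/eqP; rewrite eq_sym -subr_eq0; apply/eqP; apply: ipxx_eq0.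
rewrite ipBl !ipBr -[ip xi (p xi)]psa -[ip (p xi) (p xi)]psa pp hid.
by rewrite !subrr.
Qed.

Lemma Q_sa h : A h -> self_adjoint ip h -> h xi - p (h xi) = 0.
Proof.
move=> Ah sh; apply: nsq_eq0'; apply/ler_addgt0Pr => e e0; rewrite add0r.
have se : 0 < Num.sqrt e by rewrite sqrtr_gt0.
have [ah [cah hah]] := Happrox _ Ah sh _ se.
have hv := hnorm_lt' _ _ se hah; rewrite sqr_sqrtr ?ltW // in hv.
set v := h xi - ah xi in hv.
have e1 : h xi - p (h xi) = v - p v.
  rewrite /v (linTB _ pbnd) -{2}pxi -(comm _ _ cah Ap) pxi.
  by rewrite opprB addrA subrK.
rewrite e1; apply: le_trans (ltW hv).
by rewrite [leRHS]p_pyth lerDr nsq_ge0.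
Qed.

Lemma Q_xi a b : A a -> A b -> is_adjoint ip a b -> a xi - p (a xi) = 0.
Proof.
move=> Aa Ab hab.
have hba : forall x y, ip (b x) y = ip x (a y).
  by move=> x y; rewrite ipC -hab -ipC.
have A1 : A (fun x => 1 *: a x + 1 *: b x) by exact: inA_comb.
have A2 : A (fun x => 'i%C *: a x + (- 'i%C) *: b x) by exact: inA_comb.
have s1 : self_adjoint ip (fun x => 1 *: a x + 1 *: b x).
  by move=> x y; rewrite !scale1r ipDl ipDr hab hba addrC.
have s2 : self_adjoint ip (fun x => 'i%C *: a x + (- 'i%C) *: b x).
  move=> x y; rewrite ipDl ipDr !ipZl !ipZr hab hba cji cjN cji opprK.
  by rewrite addrC.
have q1 := Q_sa _ A1 s1; have q2 := Q_sa _ A2 s2.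
have pb := pbnd.
rewrite /= !(linTD _ pb) !(linTZ _ pb) !scale1r in q1 q2.
set u := a xi - p (a xi); set w := b xi - p (b xi).
have e1 : u + w = 0.
  by rewrite -q1 /u /w opprD addrACA.
have e2 : 'i%C *: u + (- 'i%C) *: w = 0.
  by rewrite -q2 /u /w !scalerBr opprD addrACA.
have e3 : u - w = 0.
  have := congr1 (fun t => (- 'i%C) *: t) e2.
  rewrite scalerDr !scalerA mulrNN mulNr -!expr2 sqr_i opprK scale1r scaleN1r scaler0.
  by [].
have uw : u = w by apply/eqP; rewrite -subr_eq0 e3.
have h2 : (2%:R : C) *: u = 0 by rewrite scaler_nat mulr2n {2}uw e1.
have := congr1 (fun t => (2%:R : C)^-1 *: t) h2.
by rewrite /= scalerA mulVf ?pnatr_eq0 // scale1r scaler0.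
Qed.


Lemma lim_zero (r W : R) : 0 <= W -> (forall e, 0 < e -> r ^+ 2 <= W * e) -> r = 0.
Proof.
move=> W0 h; have [//|r0] := eqVneq r 0.
have r2 : 0 < r ^+ 2 by rewrite lt_def sqrf_eq0 r0 sqr_ge0.
have k0 : 0 < 2 * (W + 1) by rewrite mulr_gt0 //; lra.
have := h (r ^+ 2 / (2 * (W + 1))) (divr_gt0 r2 k0).
rewrite mulrA ler_pdivlMr //; nra.
Qed.

Lemma step2 a b : A a -> A b -> is_adjoint ip a b ->
  forall w, a (p w) - p (a (p w)) = 0.
Proof.
move=> Aa Ab hab.
have ab := A_bnd _ Aa; have bb := A_bnd _ Ab; have pb := pbnd.
pose c := fun x => a (p x) - p (a (p x)).
pose d := fun z => p (b (z - p z)).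
have cd : forall x z, ip (c x) z = ip x (d z).
  by move=> x z; rewrite /c /d ipBl psa -ipBr hab psa.
have dlin : forall al x y, d (al *: x + y) = al *: d x + d y.
  move=> al x y; rewrite /d (linTD _ pb) (linTZ _ pb) opprD addrACA -scalerBr.
  by rewrite (linT _ bb) (linT _ pb).
have dbnd : bounded_op ip d.
  have h1 : bounded_op ip (fun z => 1 *: z + (-1) *: p z) by exact: bnd_comb bnd_id pb.
  have h2 := bnd_comp _ _ pb (bnd_comp _ _ bb h1).
  by apply: (bnd_ext _ _ h2) => z /=; rewrite scale1r scaleN1r.
pose N := fun y => forall e : R, 0 < e -> exists z, nsq (y - d z) < e.
have Nd : forall z, N (d z) by move=> z e e0; exists z; rewrite subrr nsq0.
have hN : subsp N.
  split.
  - by move=> e e0; exists 0; rewrite (linT0 _ dbnd) subrr nsq0.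
  - move=> x y Nx Ny e e0.
    have e4 : 0 < e / 4 by rewrite divr_gt0.
    have [z1 h1] := Nx _ e4; have [z2 h2] := Ny _ e4.
    exists (z1 + z2); rewrite (linTD _ dbnd).
    have -> : x + y - (d z1 + d z2) = (x - d z1) + (y - d z2).
      by rewrite opprD addrACA.
    apply: le_lt_trans (nsqD_le _ _) _; lra.
  - move=> al x Nx e e0.
    have k0 : 0 < nC al + 1 by have := nC_ge0 al; lra.
    have [z hz] := Nx (e / (nC al + 1)) (divr_gt0 e0 k0).
    exists (al *: z); rewrite (linTZ _ dbnd) -scalerBr nsqZC.
    rewrite ltr_pdivlMr // in hz.
    have := nC_ge0 al; have := nsq_ge0 (x - d z); nra.
  - move=> x hx e e0.
    have e4 : 0 < e / 4 by rewrite divr_gt0.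
    have [n [Nn hn]] := hx _ e4; have [z hz] := Nn _ e4.
    exists z.
    have -> : x - d z = (x - n) + (n - d z) by rewrite addrA subrK.
    apply: le_lt_trans (nsqD_le _ _) _; lra.
have [N0 ND NZ Ncl] := hN.
have hP := proj_exists N hN.
pose P := fun x => proj1_sig (constructive_indefinite_description _ (hP x)).
have PN : forall x, N (P x).
  by move=> x; exact: (proj1 (proj2_sig (constructive_indefinite_description _ (hP x)))).
have Porth : forall x n, N n -> ip (x - P x) n = 0.
  by move=> x; exact: (proj2 (proj2_sig (constructive_indefinite_description _ (hP x)))).
have NB : forall x y, N x -> N y -> N (x - y).
  by move=> x y Nx Ny; apply: ND => //; rewrite -scaleN1r; apply: NZ.
have Puniq : forall x m, N m -> (forall n, N n -> ip (x - m) n = 0) -> P x = m.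
  move=> x m Nm hm; apply/eqP; rewrite -subr_eq0; apply/eqP; apply: ipxx_eq0.
  have Nd' : N (P x - m) by apply: NB.
  have e : P x - m = (x - m) - (x - P x) by rewrite opprB [RHS]addrC addrA subrK.
  by rewrite {1}e ipBl hm // Porth // subrr.
have orth1 : forall w, (forall n, N n -> ip w n = 0) -> c w = 0.
  by move=> w h; apply: ipxx_eq0; rewrite cd; apply: h.
have orth2 : forall w, c w = 0 -> forall n, N n -> ip w n = 0.
  move=> w cw.
  have re0 : forall n, N n -> complex.Re (ip w n) = 0.
    move=> n Nn; apply: (lim_zero _ (nsq w) (nsq_ge0 w)) => e e0.
    have [z hz] := Nn _ e0.
    have -> : ip w n = ip w (n - d z) by rewrite ipBr -cd cw ip0l subr0.
    apply: le_trans (Re_cs _ _) _; rewrite ler_wpM2l ?nsq_ge0 //; exact: ltW.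
  move=> n Nn; apply: C_eq0; first exact: re0.
  by rewrite -Re_ipi; apply: re0; apply: NZ.
have TN : forall T, commutant ip A T -> forall y, N y -> N (T y).
  move=> T hT y Ny e e0; have hTb := comm_bnd _ hT.
  have [K [K0 hK]] := bnd_nsq _ hTb.
  have k0 : 0 < K + 1 by lra.
  have [z hz] := Ny _ (divr_gt0 e0 k0).
  exists (T z).
  have -> : d (T z) = T (d z).
    by rewrite /d (comm _ _ hT Ap) (comm _ _ hT Ab) (linTB _ hTb) (comm _ _ hT Ap).
  rewrite -(linTB _ hTb); apply: le_lt_trans (hK _) _.
  rewrite ltr_pdivlMr // in hz.
  have := nsq_ge0 (y - d z); nra.
have PT : forall T, commutant ip A T -> forall x, T (P x) = P (T x).
  move=> T hT x; have hTb := comm_bnd _ hT; symmetry; apply: Puniq; first exact: TN.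
  apply: orth2; rewrite -(linTB _ hTb).
  have -> : c (T (x - P x)) = T (c (x - P x)).
    by rewrite /c [RHS](linTB _ hTb) !(comm _ _ hT Ap) !(comm _ _ hT Aa) !(comm _ _ hT Ap).
  by rewrite orth1 ?(linT0 _ hTb) //; apply: Porth.
have Pbnd : bounded_op ip P.
  apply: (@bnd_of_nsq _ 1) => //.
    move=> al x y; apply: Puniq; first by apply: ND => //; apply: NZ.
    move=> n Nn.
    have -> : al *: x + y - (al *: P x + P y) = al *: (x - P x) + (y - P y).
      by rewrite scalerBr opprD addrACA.
    by rewrite ipDZl !Porth // mulr0 addr0.
  move=> x; rewrite mul1r.
  have -> : nsq x = nsq (P x + (x - P x)) by rewrite addrC subrK.
  rewrite nsqD ipC Porth // conjC0 mulr0 addr0 lerDl; exact: nsq_ge0.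
have AP : A P by apply: inA => // T hT x; apply: PT.
have pN : forall y, N y -> p y = y.
  move=> y Ny; apply/eqP; rewrite -subr_eq0; apply/eqP; apply: nsq_eq0'.
  apply/ler_addgt0Pr => e e0; rewrite add0r; have [z hz] := Ny _ e0.
  have -> : p y - y = - ((y - d z) - p (y - d z)).
    by rewrite (linTB _ pb) (_ : p (d z) = d z) ?opprB ?addrA ?subrK // /d pp.
  rewrite nsqN; apply: le_trans (ltW hz); rewrite [leRHS]p_pyth lerDr nsq_ge0 //.
have Pp : forall x, P (x - p x) = 0.
  move=> x; apply: Puniq => // n Nn; rewrite subr0 -(pN _ Nn); exact: p_orth.
have P_px : forall x, P (p x) = P x.
  move=> x; have := Pp x; rewrite (linTB _ Pbnd) => /eqP; rewrite subr_eq0 => /eqP.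
  by [].
have PPx : forall x, P (P x) = P x.
  by move=> x; apply: Puniq => // n Nn; rewrite subrr ip0l.
have pP : forall x, p (P x) = P x by move=> x; apply: pN.
have Psa : forall x y, ip (P x) y = ip x (P y).
  move=> x y.
  have e1 : ip (P x) y = ip (P x) (P y) + ip (P x) (y - P y).
    by rewrite -ipDr addrC subrK.
  have e2 : ip x (P y) = ip (P x) (P y) + ip (x - P x) (P y).
    by rewrite -ipDl addrC subrK.
  have o1 := Porth x (P y) (PN y); have o2 := Porth y (P x) (PN x).
  by rewrite e1 e2 o1 [ip (P x) (y - P y)]ipC o2 conjC0 !addr0.
pose E := fun x => 1 *: p x + (-1) *: P x.
have AE : A E by exact: (inA_comb p P 1 (-1) Ap AP).
have Eb := A_bnd _ AE.
have Eproj : is_projection ip E.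
  split => //; split.
    move=> x; rewrite /E /= !scale1r !scaleN1r.
    by rewrite (linTD _ pb) (linTN _ pb) (linTD _ Pbnd) (linTN _ Pbnd) pp pP P_px PPx subrr subr0.
  move=> x y; rewrite /E !scale1r !scaleN1r ipDl ipDr ipNl ipNr psa Psa //.
have cxi : c xi = 0 by rewrite /c pxi; exact: Q_xi Aa Ab hab.
have Pxi : P xi = 0.
  by apply: Puniq => // n Nn; rewrite subr0; apply: orth2.
have Exi : E xi = xi by rewrite /E Pxi scaler0 addr0 scale1r pxi.
have Eom : forall x, A x -> omega ip xi x = omega ip xi (E \o x \o E).
  move=> x Ax; rewrite /omega /= Exi.
  have [_ [_ hs]] := Eproj; by rewrite hs Exi.
have hle := p_min _ AE Eproj Eom.
have P0 : forall y, P y = 0.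
  move=> y; have := hle y; rewrite /E pp P_px scale1r scaleN1r => /eqP.
  by rewrite addrC -subr_eq0 addrK oppr_eq0 => /eqP.
have d0 : forall z, d z = 0.
  move=> z; rewrite -(P0 (d z)); symmetry; apply: Puniq => // n Nn.
  by rewrite subrr ip0l.
move=> w; apply: ipxx_eq0; rewrite -/(c w) cd d0 ip0r //.
Qed.

Lemma final a : A a -> forall x, p (a x) = a (p x).
Proof.
move=> Aa x; have [b [Ab hab]] := A_adj _ Aa.
have hba : is_adjoint ip b a by move=> u v; rewrite ipC -hab -ipC.
have sa := step2 _ _ Aa Ab hab; have sb := step2 _ _ Ab Aa hba.
apply/eqP; rewrite -subr_eq0; apply/eqP; apply: ip_eq0_all => y.
have eb : b (p y) = p (b (p y)) by apply: subr0_eq; exact: sb.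
have ea : a (p x) = p (a (p x)) by apply: subr0_eq; exact: sa.
rewrite ipBl psa hab eb -psa -hab -psa -ea.
by rewrite subrr.
Qed.
End Main.
End Dev.

Theorem mainTheorem6 (R : realType) (V : lmodType R[i]) (ip : V -> V -> R[i])
  (HH : is_hilbert ip) (A : (V -> V) -> Prop) (HA : von_neumann_algebra ip A)
  (xi : V) (epsA : V -> V) (Hsupp : is_support ip A xi epsA)
  (Happrox : forall a : V -> V, A a -> self_adjoint ip a ->
     forall e : R, 0 < e -> exists ah : V -> V,
       commutant ip A ah /\ hnorm ip (a xi - ah xi) < e) :
  forall a : V -> V, A a -> forall x : V, epsA (a x) = a (epsA x).
Proof.
move=> a Aa x.
exact: (@final R V ip HH A HA xi epsA Hsupp Happrox a Aa x).
Qed.
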